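(* Let $q\ge 1$, let $u:(0,\infty)\to[0,\infty)$, and put $\psi(s)=s\,u(s)$. Assume $\psi$ is non-decreasing on $(0,\infty)$ and bounded, with $\kappa:=\sup_{s>0}\psi(s)=\lim_{s\to\infty}\psi(s)$. Let $x_1,\dots,x_n\in\mathbb{R}^q$ be arbitrary data points, with the convention stated in the context for terms with $x_i=0$. (a) Let $\eta>0$ and suppose $\kappa<1$. Then every symmetric positive definite $q\times q$ matrix $\Sigma$ satisfying $$\Sigma=\frac1n\sum_{i=1}^n u(x_i^{\mathrm T}\Sigma^{-1}x_i)\,x_ix_i^{\mathrm T}+\eta I_q$$ satisfies $$\eta I_q\le \Sigma\le \frac{\eta}{1-\kappa}I_q .$$ (b) Let $0<\gamma\le 1$ and suppose $\kappa<1/(1-\gamma)$, i.e. $(1-\gamma)\kappa<1$. Then every symmetric positive definite $q\times q$ matrix $\Sigma$ satisfying $$\Sigma=(1-\gamma)\frac1n\sum_{i=1}^n u(x_i^{\mathrm T}\Sigma^{-1}x_i)\,x_ix_i^{\mathrm T}+\gamma I_q$$ satisfies $$\gamma I_q\le \Sigma\le \frac{\gamma}{1-(1-\gamma)\kappa}I_q .$$ Consequently, for any estimator defined, for every finite data set, as a positive definite solution of the equation in (a) (with $\eta>0$, $\kappa<1$), resp. of the equation in (b) (with $0<\gamma\le1$, $(1-\gamma)\kappa<1$), the finite-sample contamination breakdown point equals $1$ at every data set; i.e., the estimator cannot break down.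
   Context: Inequalities between symmetric matrices refer to the Loewner order: $A\le B$ means $B-A$ is positive semidefinite; $I_q$ is the $q\times q$ identity. Convention: if some data point $z=0$, the corresponding summand $u(z^{\mathrm T}Az)zz^{\mathrm T}$ is interpreted as the zero matrix. Finite-sample contamination breakdown point: for a data set $X=\{x_1,\dots,x_n\}$ and $m\ge1$, add arbitrary points $Y=\{y_1,\dots,y_m\}$ to form $Z=X\cup Y$. For a scatter statistic $V(\cdot)$ (taking values in positive definite matrices), breakdown at contamination level $m/(n+m)$ occurs if, over all choices of $Y$ with $|Y|=m$, either $V(Z)$ fails to exist for some $Y$, or the largest eigenvalue of $V(Z)$ is unbounded, or the smallest eigenvalue of $V(Z)$ is not bounded away from $0$ (equivalently $\sup_Y\|\log(V(X)^{-1/2}V(Z)V(X)^{-1/2})\|_F=\infty$). The breakdown point is the smallest $m/(n+m)$ at which breakdown occurs; it is said to equal $1$ when breakdown never occurs, for any $m$. *)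

(* Defs.v *)
From HB Require Import structures.
From mathcomp Require Import all_boot all_order all_algebra.
Set Implicit Arguments. Unset Strict Implicit. Unset Printing Implicit Defensive.
Import Order.TTheory GRing.Theory Num.Theory.
Local Open Scope ring_scope.

Section Defs.
Variable R : rcfType.
Variable q : nat.

Definition qform (A : 'M[R]_q) (v : 'cV[R]_q) : R := (v^T *m A *m v) 0 0.

Definition psdmx (A : 'M[R]_q) : Prop :=
  A^T = A /\ forall v : 'cV[R]_q, 0 <= qform A v.

Definition pdmx (A : 'M[R]_q) : Prop :=
  A^T = A /\ forall v : 'cV[R]_q, v != 0 -> 0 < qform A v.

Definition loewner_le (A B : 'M[R]_q) : Prop := psdmx (B - A).

Definition Msum (u : R -> R) (S : 'M[R]_q) (s : seq 'cV[R]_q) : 'M[R]_q :=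
  \sum_(x <- s) (if x == 0 then 0
                 else u ((x^T *m invmx S *m x) 0 0) *: (x *m x^T)).

Definition eq_a (eta : R) (u : R -> R) (S : 'M[R]_q) (s : seq 'cV[R]_q) : Prop :=
  S = (size s)%:R^-1 *: Msum u S s + eta%:M.

Definition eq_b (gamma : R) (u : R -> R) (S : 'M[R]_q) (s : seq 'cV[R]_q) : Prop :=
  S = ((1 - gamma) * (size s)%:R^-1) *: Msum u S s + gamma%:M.

(* Contamination of data set X by m points Y does NOT cause breakdown of the
   scatter statistic V: V(X ∪ Y) exists (V is total) and its eigenvalues stay
   within [c, C] with c > 0 uniformly over all Y with |Y| = m. *)
Definition no_breakdown_at (V : seq 'cV[R]_q -> 'M[R]_q) (X : seq 'cV[R]_q) (m : nat) : Prop :=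
  exists c C : R, 0 < c /\
    forall Y : seq 'cV[R]_q, size Y = m ->
      loewner_le c%:M (V (X ++ Y)) /\ loewner_le (V (X ++ Y)) C%:M.

Definition breakdown_point_one (V : seq 'cV[R]_q -> 'M[R]_q) (X : seq 'cV[R]_q) : Prop :=
  forall m : nat, (0 < m)%N -> no_breakdown_at V X m.

End Defs.

(* Main.v *)
Require Import Defs.
From HB Require Import structures.
From mathcomp Require Import all_boot all_order all_algebra.
From mathcomp Require Import ring lra.
Import Order.TTheory GRing.Theory Num.Theory.
Local Open Scope ring_scope.
Section H.
Variable R : rcfType.
Variable q : nat.
Implicit Types (A S : 'M[R]_q) (v w x : 'cV[R]_q).

Definition bf A (a b : 'cV[R]_q) : R := (a^T *m A *m b) 0 0.

Lemma bf_sym A v w : A^T = A -> bf A w v = bf A v w.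
Proof.
move=> hA; rewrite /bf -[in LHS]hA.
have tr1 : forall M : 'M[R]_1, M 0 0 = M^T 0 0 by move=> M; rewrite mxE.
by rewrite tr1 !trmx_mul !trmxK mulmxA.
Qed.

Lemma tr1 (M : 'M[R]_1) : M 0 0 = M^T 0 0.
Proof. by rewrite mxE. Qed.

Lemma mul11 (M N : 'M[R]_1) : (M *m N) 0 0 = M 0 0 * N 0 0.
Proof. by rewrite mxE big_ord1. Qed.

Lemma bf_expand A v w a b : A^T = A ->
  bf A (a*:v + b*:w) (a*:v + b*:w) =
  a^+2 * bf A v v + 2*a*b * bf A v w + b^+2 * bf A w w.
Proof.
move=> hA; have hs := bf_sym A v w hA; move: hs.
rewrite /bf !linearD /= !linearZ /=. rewrite ?mulmxDl ?mulmxDr ?mulmxDl.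
rewrite -?scalemxAl -?scalemxAr -?scalemxAl !mxE => hs. idtac.
rewrite hs; ring.
Qed.

Lemma qformD A B v : qform (A + B) v = qform A v + qform B v.
Proof. by rewrite /qform mulmxDr mulmxDl mxE. Qed.

Lemma qformZ a A v : qform (a *: A) v = a * qform A v.
Proof. by rewrite /qform -scalemxAr -scalemxAl mxE. Qed.

Lemma qform0 v : qform 0 v = 0.
Proof. by rewrite /qform mulmx0 mul0mx mxE. Qed.

Lemma qformB A B v : qform (A - B) v = qform A v - qform B v.
Proof. by rewrite -scaleN1r qformD qformZ; ring. Qed.

Lemma qform_xx x v : qform (x *m x^T) v = ((v^T *m x) 0 0) ^+ 2.
Proof.
rewrite /qform mulmxA -mulmxA mul11 expr2; congr (_ * _).
by rewrite tr1 trmx_mul trmxK.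
Qed.

Lemma pd_ge0 S v : pdmx S -> 0 <= qform S v.
Proof.
move=> [_ hS]; have [->|nz] := eqVneq v 0.
  by rewrite /qform mulmx0 mxE.
exact: ltW (hS _ nz).
Qed.

Lemma pd_unit S : pdmx S -> S \in unitmx.
Proof.
move=> [hT hS]; rewrite -row_free_unit -kermx_eq0.
case: (pickP (fun i => row i (kermx S) != 0)) => [i hi | h]; last first.
  apply/eqP/row_matrixP => i; rewrite row0; apply/eqP.
  by move: (h i) => /negbFE.
have nz : (row i (kermx S))^T != 0.
  by apply: contra hi => /eqP h0; rewrite -(trmxK (row i _)) h0 trmx0.
have := hS _ nz; rewrite /qform trmxK -row_mul mulmx_ker row0 mul0mx mxE.
by rewrite ltxx.
Qed.

Lemma key (u : R -> R) (k : R) S x v :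
  (forall s, 0 < s -> 0 <= u s) -> (forall s, 0 < s -> s * u s <= k) ->
  pdmx S -> x != 0 ->
  0 <= u ((x^T *m invmx S *m x) 0 0) /\
  u ((x^T *m invmx S *m x) 0 0) * ((v^T *m x) 0 0) ^+ 2 <= k * qform S v.
Proof.
move=> hu hk hpd nx.
have hU := pd_unit S hpd.
have [hT hS] := hpd.
set w := invmx S *m x.
have Sw : S *m w = x by rewrite /w mulKVmx.
have nw : w != 0 by apply: contra nx => /eqP h0; rewrite -Sw h0 mulmx0.
have tE : (x^T *m invmx S *m x) 0 0 = qform S w.
  rewrite /qform /w trmx_mul trmx_inv hT -!mulmxA; congr ((_ *m _) 0 0).
  by rewrite mulKVmx.
have Bw : bf S v w = (v^T *m x) 0 0 by rewrite /bf -mulmxA Sw.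
rewrite tE; set t := qform S w.
have tpos : 0 < t := hS _ nw.
have ut := hu _ tpos.
have tu := hk _ tpos.
set B : R := (v^T *m x) 0 0.
set A := qform S v.
have A0 : 0 <= A := pd_ge0 S v hpd.
have := pd_ge0 S (t *: v + (- B) *: w) hpd.
rewrite /qform -/(bf S _ _) bf_expand // Bw -/(qform S v) -/(bf S w w) -/(qform S w) -/t -/A => h.
have hc : 0 <= t * (t * A - B ^+ 2).
  move: h; rewrite (_ : bf S v v = A) // (_ : bf S w w = t) //.
  congr (_ <= _); rewrite /B; ring.
have hB : B ^+ 2 <= t * A.
  by rewrite -subr_ge0; move: hc; rewrite pmulr_rge0.
split => //; nra.
Qed.

Lemma qform_Msum (u : R -> R) S s v : qform (Msum u S s) v =
  \sum_(x <- s) (if x == 0 then 0 else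
     u ((x^T *m invmx S *m x) 0 0) * ((v^T *m x) 0 0) ^+ 2).
Proof.
elim: s => [|x s IH]; first by rewrite /Msum !big_nil qform0.
rewrite /Msum !big_cons qformD -/(Msum u S s) IH; case: eqP => _.
  by rewrite qform0.
by rewrite qformZ qform_xx.
Qed.

Lemma main (u : R -> R) (k c eta : R) S s :
  (forall s, 0 < s -> 0 <= u s) -> (forall s, 0 < s -> s * u s <= k) ->
  0 <= c -> 0 < eta -> c * k < 1 -> pdmx S ->
  S = (c * (size s)%:R^-1) *: Msum u S s + eta%:M ->
  loewner_le eta%:M S /\ loewner_le S (eta / (1 - c * k))%:M.
Proof.
move=> hu hk c0 eta0 ck1 hpd hS.
have k0 : 0 <= k.
  have := hk 1 ltr01; have := hu 1 ltr01; rewrite mul1r => h1 h2.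
  exact: le_trans h1 h2.
have [hT _] := hpd.
have key1 : forall v, let A := qform S v in
  let Y := \sum_(x <- s) (if x == 0 then 0 else
     u ((x^T *m invmx S *m x) 0 0) * ((v^T *m x) 0 0) ^+ 2) in
  [/\ 0 <= A, 0 <= Y, Y <= (size s)%:R * (k * A) &
      A = c * (size s)%:R^-1 * Y + eta * qform 1%:M v].
  move=> v A Y.
  have A0 : 0 <= A := pd_ge0 S v hpd.
  split => //.
  - rewrite /Y; elim: s {hS Y} => [|x s IH]; first by rewrite big_nil.
    rewrite big_cons; case: eqP => [_|/eqP nx]; first by rewrite add0r.
    have [h1 _] := key u k S x v hu hk hpd nx.
    by apply: addr_ge0 => //; apply: mulr_ge0 => //; apply: sqr_ge0.
  - rewrite /Y; elim: s {hS Y} => [|x s IH]; first by rewrite big_nil mul0r.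
    rewrite big_cons /= -[(size s).+1]add1n natrD mulrDl mul1r; apply: lerD => //.
    case: eqP => [_|/eqP nx]; first by apply: mulr_ge0.
    by have [_ h2] := key u k S x v hu hk hpd nx.
  - by rewrite /A {1}hS qformD qformZ qform_Msum -[eta%:M]scalemx1 qformZ.
have hD : 0 < 1 - c * k by rewrite subr_gt0.
split.
  split; first by rewrite linearB /= hT tr_scalar_mx.
  move=> v; rewrite qformB -[eta%:M]scalemx1 qformZ.
  have [A0 Y0 YA ->] := key1 v; rewrite addrK.
  by apply: mulr_ge0 => //; apply: mulr_ge0 => //; rewrite invr_ge0.
split; first by rewrite linearB /= hT tr_scalar_mx.
move=> v; have [A0 Y0 YA hA] := key1 v.
rewrite qformB -[_%:M]scalemx1 qformZ.
set A := qform S v in A0 YA hA *.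
set Y := \sum_(x <- s) _ in Y0 YA hA *.
set nv := qform 1%:M v in hA *.
set n := (size s)%:R in YA hA.
set D := 1 - c * k in hD *.
have hy : n^-1 * Y <= k * A.
  have [n0|nz] := eqVneq n 0.
    by rewrite n0 invr0 mul0r; apply: mulr_ge0.
  have npos : 0 < n by rewrite lt0r nz /n ler0n.
  rewrite ler_pdivrMl //.
have y0 : 0 <= n^-1 * Y by apply: mulr_ge0 => //; rewrite invr_ge0 /n ler0n.
have hAD : A * D <= eta * nv.
  have hA' : A = c * (n^-1 * Y) + eta * nv by rewrite hA mulrA.
  move: hA' y0 hy; rewrite /D; set y := n^-1 * Y => hA' y0 hy.
  have : c * y <= c * (k * A) by apply: ler_wpM2l.
  nra.
rewrite subr_ge0 mulrAC ler_pdivlMr //.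
Qed.
End H.

Theorem theorem1 (R : rcfType) (q : nat) (u : R -> R) (kappa : R)
  (hq : (0 < q)%N)
  (hu_nonneg : forall s : R, 0 < s -> 0 <= u s)
  (hpsi_mono : forall s t : R, 0 < s -> s <= t -> s * u s <= t * u t)
  (hpsi_bdd : exists B : R, forall s : R, 0 < s -> s * u s <= B)
  (hkappa_ub : forall s : R, 0 < s -> s * u s <= kappa)
  (hkappa_sup : forall e : R, 0 < e -> exists s : R, 0 < s /\ kappa - e < s * u s)
  (hkappa_lim : forall e : R, 0 < e -> exists M : R,
      forall s : R, 0 < s -> M <= s -> `|s * u s - kappa| < e) :
  (* (a) *)
  (forall eta : R, 0 < eta -> kappa < 1 ->
     forall (xs : seq 'cV[R]_q) (S : 'M[R]_q), pdmx S -> eq_a eta u S xs ->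
       loewner_le eta%:M S /\ loewner_le S (eta / (1 - kappa))%:M)
  /\
  (* (b) *)
  (forall gamma : R, 0 < gamma -> gamma <= 1 -> (1 - gamma) * kappa < 1 ->
     forall (xs : seq 'cV[R]_q) (S : 'M[R]_q), pdmx S -> eq_b gamma u S xs ->
       loewner_le gamma%:M S /\ loewner_le S (gamma / (1 - (1 - gamma) * kappa))%:M)
  /\
  (* consequence for estimators defined via (a) *)
  (forall eta : R, 0 < eta -> kappa < 1 ->
     forall V : seq 'cV[R]_q -> 'M[R]_q,
       (forall xs, pdmx (V xs) /\ eq_a eta u (V xs) xs) ->
       forall X : seq 'cV[R]_q, breakdown_point_one V X)
  /\
  (* consequence for estimators defined via (b) *)
  (forall gamma : R, 0 < gamma -> gamma <= 1 -> (1 - gamma) * kappa < 1 ->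
     forall V : seq 'cV[R]_q -> 'M[R]_q,
       (forall xs, pdmx (V xs) /\ eq_b gamma u (V xs) xs) ->
       forall X : seq 'cV[R]_q, breakdown_point_one V X).

Proof.
have pa : forall eta : R, 0 < eta -> kappa < 1 ->
     forall (xs : seq 'cV[R]_q) (S : 'M[R]_q), pdmx S -> eq_a eta u S xs ->
       loewner_le eta%:M S /\ loewner_le S (eta / (1 - kappa))%:M.
  move=> eta e0 k1 xs S hpd heq.
  have := main R q u kappa 1 eta S xs hu_nonneg hkappa_ub ler01 e0 _ hpd.
  by rewrite !mul1r => h; apply: h k1 heq.
have pb : forall gamma : R, 0 < gamma -> gamma <= 1 -> (1 - gamma) * kappa < 1 ->
     forall (xs : seq 'cV[R]_q) (S : 'M[R]_q), pdmx S -> eq_b gamma u S xs ->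
       loewner_le gamma%:M S /\ loewner_le S (gamma / (1 - (1 - gamma) * kappa))%:M.
  move=> g g0 g1 gk xs S hpd heq.
  apply: (main R q u kappa (1 - g) g S xs hu_nonneg hkappa_ub _ g0 gk hpd heq).
  by rewrite subr_ge0.
split; first exact: pa.
split; first exact: pb.
split.
  move=> eta e0 k1 V hV X m _; exists eta, (eta / (1 - kappa)); split => // Y _.
  have [h1 h2] := hV (X ++ Y); exact: (pa eta e0 k1 _ _ h1 h2).
move=> g g0 g1 gk V hV X m _; exists g, (g / (1 - (1 - g) * kappa)); split => // Y _.
have [h1 h2] := hV (X ++ Y); exact: (pb g g0 g1 gk _ _ h1 h2).
Qed.
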